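(* Let $\alpha>\beta\geq 1$ be two real numbers such that $\alpha/\beta\notin\mathbb{N}$ and $[\alpha,\beta]\le \alpha/\beta$. Then there are no solutions to the equation $m\alpha=n\beta$ with $m$ and $n$ natural numbers such that $P^-(m)>\alpha$.
   Context: Height: for irrational $\rho>0$, $H(\rho)=\infty$; for $\rho=a/q$ with $a,q\in\mathbb{N}$, $\gcd(a,q)=1$, $H(\rho)=\max\{a,q\}$. Bracket: $[\alpha,\beta]=H(\alpha/\beta)/\max\{\alpha,\beta\}$. $P^-(n)$ denotes the smallest prime factor of $n\in\mathbb{N}$, with $P^-(1)=\infty$. *)

(* Defs.v *)
From HB Require Import structures.
From mathcomp Require Import all_boot all_order all_algebra.
From mathcomp Require Import boolp classical_sets reals constructive_ereal.
Set Implicit Arguments. Unset Strict Implicit. Unset Printing Implicit Defensive.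
Import Order.TTheory GRing.Theory Num.Theory.
Local Open Scope ring_scope.
Local Open Scope classical_set_scope.

Definition reduced_rep (R : realType) (rho : R) : set (nat * nat) :=
  [set p | (0 < p.1)%N /\ (0 < p.2)%N /\ coprime p.1 p.2 /\
           rho = p.1%:R / p.2%:R].

(* Height H(rho): max{a,q} if rho = a/q in lowest terms, +oo otherwise
   (i.e. for irrational rho; the paper only uses rho > 0). *)
Definition height (R : realType) (rho : R) : \bar R :=
  if pselect (exists p, reduced_rep rho p) then
    let p := xget (0%N, 0%N) (reduced_rep rho) in ((maxn p.1 p.2)%:R)%:E
  else +oo%E.

Definition bracket (R : realType) (alpha beta : R) : \bar R :=
  (height (alpha / beta) * ((Num.max alpha beta)^-1)%:E)%E.

Definition Pminus (R : realType) (n : nat) : \bar R :=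
  if n == 1%N then +oo%E else ((pdiv n)%:R)%:E.

(* Main.v *)
Require Import Defs.
From HB Require Import structures.
From mathcomp Require Import all_boot all_order all_algebra.
From mathcomp Require Import boolp classical_sets reals constructive_ereal.
From mathcomp Require Import ring lra.
Import Order.TTheory GRing.Theory Num.Theory.
Local Open Scope ring_scope.

Theorem lemma2p7 (R : realType) (alpha beta : R) :
  beta < alpha -> 1 <= beta ->
  ~ (exists k : nat, (0 < k)%N /\ alpha / beta = k%:R) ->
  (bracket alpha beta <= (alpha / beta)%:E)%E ->
  ~ (exists m n : nat, [/\ (0 < m)%N, (0 < n)%N,
        m%:R * alpha = n%:R * beta & (alpha%:E < Pminus R m)%E]).
Proof.
move=> hba hb1 hnk hbr [m [n [hm hn heq hP]]].
have hb0 : 0 < beta by lra.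
have ha0 : 0 < alpha by lra.
have bne0 : beta != 0 by rewrite gt_eqF.
have hmax : Num.max alpha beta = alpha by apply/max_idPl; apply: ltW.
rewrite /bracket /height hmax in hbr.
case: pselect => [ex|nex] in hbr; last first.
  rewrite gt0_mulye in hbr; last by rewrite lte_fin invr_gt0.
  by move: hbr; rewrite leNgt ltey.
move: hbr (xgetPex (0%N,0%N) ex); case: xget => a q /= hbr [ha [hq [hco hrho]]].
rewrite /= in ha hq hco hrho.
have q1 : q != 1%N.
  apply/negP => /eqP q1; apply: hnk; exists a; split => //.
  by rewrite hrho q1 divr1.
have hq1 : (1 < q)%N by rewrite ltn_neqAle eq_sym q1 hq.
have hqa : (q < a)%N.
  have : 1 < alpha / beta by rewrite ltr_pdivlMr // mul1r.
  rewrite hrho ltr_pdivlMr ?ltr0n // mul1r ltr_nat //.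
have hmx : maxn a q = a by apply/maxn_idPl; apply: ltnW.
move: hbr; rewrite hmx -EFinM lee_fin hrho ler_pM2l ?ltr0n // lef_pV2 ?posrE ?ltr0n // => hqal.
have e : m%:R * a%:R * beta = n%:R * q%:R * beta.
  have ea : a%:R = alpha / beta * q%:R by rewrite hrho divfK // gt_eqF ?ltr0n.
  rewrite ea.
  have -> : n%:R * q%:R * beta = (n%:R*beta)*q%:R by ring.
  rewrite -heq. by field.
move/(mulIf bne0): e; rewrite -!natrM => /eqP; rewrite eqr_nat => /eqP e.
have qm : (q %| m)%N.
  by rewrite -(Gauss_dvdl _ (etrans (coprime_sym q a) hco)) e dvdn_mull.
have m1 : m != 1%N.
  by apply/negP => /eqP m1; move: qm; rewrite m1 dvdn1 => /eqP q1'; rewrite q1' in q1.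
have pd := pdiv_min_dvd hq1 qm.
move: hP; rewrite /Pminus (negbTE m1) lte_fin => hP.
have h : (pdiv m)%:R <= q%:R :> R by rewrite ler_nat.
by have := lt_le_trans hP (le_trans h hqal); rewrite ltxx.
Qed.
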